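(* Let $W_2\in\{M_2,S_2\}$ and let $\phi:W_2\to W_2$ be a linear map with $\sigma_{\mathcal{K}}(\phi(A))=\sigma_{\mathcal{K}}(A)$ for all $A\in W_2$. Then $\phi(E_{12}+E_{21})=E_{12}+E_{21}$ or $\phi(E_{12}+E_{21})=-(E_{12}+E_{21})$.
   Context: $M_2$: real $2\times2$ matrices; $S_2$: symmetric ones; $E_{ij}$ is the matrix with $1$ in position $(i,j)$ and $0$ elsewhere. Lorentz cone $\mathcal{K}=\{(x_1,x_2)^T:|x_1|\le x_2\}$; a real $\lambda$ is an L-eigenvalue of $A$ if there is a nonzero $x\in\mathcal{K}$ with $(A-\lambda I)x\in\mathcal{K}$ and $x^T(A-\lambda I)x=0$; $\sigma_{\mathcal{K}}(A)$ is the set of L-eigenvalues. *)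

(* Defs.v *)
From HB Require Import structures.
From mathcomp Require Import all_boot all_order all_algebra.
From mathcomp Require Import reals.
Set Implicit Arguments. Unset Strict Implicit. Unset Printing Implicit Defensive.
Import Order.TTheory GRing.Theory Num.Theory.
Local Open Scope ring_scope.

(* indices 1 and 2 of the paper are ord0 and ord_max in 'I_2 *)
Definition i1 : 'I_2 := ord0.
Definition i2 : 'I_2 := ord_max.

Definition E (R : realType) (i j : 'I_2) : 'M[R]_2 := delta_mx i j.

Definition inK (R : realType) (x : 'cV[R]_2) : Prop := `|x i1 0| <= x i2 0.

Definition is_Leig (R : realType) (A : 'M[R]_2) (l : R) : Prop :=
  exists x : 'cV[R]_2,
    [/\ x != 0, inK x, inK ((A - l%:M) *m x) & (x^T *m (A - l%:M) *m x) 0 0 = 0].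

Definition sigmaK (R : realType) (A : 'M[R]_2) : R -> Prop := is_Leig A.

Definition symmetric2 (R : realType) (A : 'M[R]_2) : Prop := A^T = A.

(* Main.v *)
Require Import Defs.
From HB Require Import structures.
From mathcomp Require Import all_boot all_order all_algebra.
From mathcomp Require Import reals.
From mathcomp Require Import ring lra.
Import Order.TTheory GRing.Theory Num.Theory.
Local Open Scope ring_scope.
Section S.
Variable R : realType.
Definition Lpred (a b g d l : R) : Prop :=
  (0 <= g /\ l = a) \/ (0 <= b /\ l = d) \/
  exists p q : R, [/\ 0 < p, 0 < q, (a - l) * p + b * q = 0 & g * p + (d - l) * q = 0].

Lemma real_char (m00 m01 m10 m11 l : R) :
 (exists x0 x1 : R, [/\ 0 < x1, `|x0| <= x1,
    `|(m00 - l)*x0 + m01*x1| <= m10*x0 + (m11-l)*x1 &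
    x0*((m00-l)*x0 + m01*x1) + x1*(m10*x0 + (m11-l)*x1) = 0])
 <-> Lpred ((m00+m01+m10+m11)/2) ((m01+m11-m00-m10)/2) ((m10+m11-m00-m01)/2) ((m00-m01-m10+m11)/2) l.
Proof.
set a := (m00+m01+m10+m11)/2; set b := (m01+m11-m00-m10)/2.
set g := (m10+m11-m00-m01)/2; set d := (m00-m01-m10+m11)/2.
split.
- move=> [x0 [x1 [hx1 hx hy hxy]]].
  set y0 := (m00 - l)*x0 + m01*x1 in hy hxy.
  set y1 := m10*x0 + (m11-l)*x1 in hy hxy.
  move: hx hy; rewrite !ler_norml => /andP[hx0 hx0'] /andP[hy0 hy0'].
  have hp : 0 <= (x0+x1)/2 by lra.
  have hq : 0 <= (x1-x0)/2 by lra.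
  have hu : 0 <= (y0+y1)/2 by lra.
  have hv : 0 <= (y1-y0)/2 by lra.
  have hs : (x0+x1)/2 * ((y0+y1)/2) + (x1-x0)/2 * ((y1-y0)/2) = 0.
    by rewrite -[RHS](mulr0 (2^-1)) -hxy; field.
  have h1 : (x0+x1)/2 * ((y0+y1)/2) = 0.
    have := mulr_ge0 hp hu; have := mulr_ge0 hq hv; lra.
  have h2 : (x1-x0)/2 * ((y1-y0)/2) = 0 by lra.
  have eu : (y0+y1)/2 = (a - l) * ((x0+x1)/2) + b * ((x1-x0)/2).
    by rewrite /y0 /y1 /a /b; field.
  have ev : (y1-y0)/2 = g * ((x0+x1)/2) + (d - l) * ((x1-x0)/2).
    by rewrite /y0 /y1 /g /d; field.
  move: hp hq hu hv h1 h2 eu ev.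
  set p := (x0+x1)/2; set q := (x1-x0)/2; set u := (y0+y1)/2; set v := (y1-y0)/2.
  have hpq : p + q = x1 by rewrite /p /q; field.
  move=> hp hq hu hv h1 h2 eu ev.
  have [q0|qpos] := eqVneq q 0.
    have pp : 0 < p by lra.
    have u0 : u = 0 by move/eqP: h1; rewrite mulf_eq0 gt_eqF //= => /eqP.
    left; split.
      by move: hv; rewrite ev q0 mulr0 addr0; nra.
    by move: eu; rewrite u0 q0 mulr0 addr0; nra.
  have qp : 0 < q by rewrite lt_neqAle eq_sym qpos hq.
  have v0 : v = 0 by move/eqP: h2; rewrite mulf_eq0 gt_eqF //= => /eqP.
  have [p0|ppos] := eqVneq p 0.
    right; left; split.
      by move: hu; rewrite eu p0 mulr0 add0r; nra.
    by move: ev; rewrite v0 p0 mulr0 add0r; nra.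
  have pp : 0 < p by rewrite lt_neqAle eq_sym ppos hp.
  have u0 : u = 0 by move/eqP: h1; rewrite mulf_eq0 gt_eqF //= => /eqP.
  right; right; exists p, q; split => //; [by rewrite -eu | by rewrite -ev].
- case=> [[hg ->]|[[hb ->]|[p [q [hp hq e1 e2]]]]].
  + exists 1, 1; split; rewrite ?normr1 ?ltr01 ?lexx //.
    * have -> : (m00 - a) * 1 + m01 * 1 = - g by rewrite /a /g; field.
      have -> : m10 * 1 + (m11 - a) * 1 = g by rewrite /a /g; field.
      by rewrite normrN ger0_norm.
    * by rewrite /a; field.
  + exists (-1); exists 1; split; rewrite ?normrN ?normr1 ?ltr01 ?lexx //.
    * have -> : (m00 - d) * -1 + m01 * 1 = b by rewrite /d /b; field.
      have -> : m10 * -1 + (m11 - d) * 1 = b by rewrite /d /b; field.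
      by rewrite ger0_norm.
    * by rewrite /d; field.
  + exists (p - q), (p + q); split.
    * lra.
    * rewrite ler_norml; apply/andP; split; lra.
    * have -> : (m00 - l) * (p - q) + m01 * (p + q) = ((a - l) * p + b * q) - (g * p + (d - l) * q).
        by rewrite /a /b /g /d; field.
      have -> : m10 * (p - q) + (m11 - l) * (p + q) = ((a - l) * p + b * q) + (g * p + (d - l) * q).
        by rewrite /a /b /g /d; field.
      by rewrite e1 e2 subr0 addr0 normr0.
    * have -> : (m00 - l) * (p - q) + m01 * (p + q) = ((a - l) * p + b * q) - (g * p + (d - l) * q).
        by rewrite /a /b /g /d; field.
      have -> : m10 * (p - q) + (m11 - l) * (p + q) = ((a - l) * p + b * q) + (g * p + (d - l) * q).
        by rewrite /a /b /g /d; field.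
      by rewrite e1 e2 subr0 addr0 !mulr0 addr0.
Qed.
Lemma ord2 (i : 'I_2) : i = i1 \/ i = i2.
Proof. case: i => [[|[|k]]] Hi; [left|right|by []]; exact: val_inj. Qed.
Lemma lift00 : lift ord0 (ord0 : 'I_1) = i2.
Proof. exact: val_inj. Qed.
Lemma mulE (A : 'M[R]_2) (x : 'cV[R]_2) i : (A *m x) i 0 = A i i1 * x i1 0 + A i i2 * x i2 0.
Proof. by rewrite mxE !big_ord_recl big_ord0 addr0 lift00. Qed.
Lemma subE (M : 'M[R]_2) l : [/\ (M - l%:M) i1 i1 = M i1 i1 - l, (M - l%:M) i1 i2 = M i1 i2,
  (M - l%:M) i2 i1 = M i2 i1 & (M - l%:M) i2 i2 = M i2 i2 - l].
Proof. rewrite !mxE /=. split => //; by rewrite ?mulr1n ?mulr0n ?subr0. Qed.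
Lemma qE (A : 'M[R]_2) (x : 'cV[R]_2) : (x^T *m A *m x) 0 0 = x i1 0 * (A *m x) i1 0 + x i2 0 * (A *m x) i2 0.
Proof. by rewrite -mulmxA mxE !big_ord_recl big_ord0 addr0 lift00 !mxE. Qed.
Definition ca (M : 'M[R]_2) := (M i1 i1 + M i1 i2 + M i2 i1 + M i2 i2)/2.
Definition cb (M : 'M[R]_2) := (M i1 i2 + M i2 i2 - M i1 i1 - M i2 i1)/2.
Definition cg (M : 'M[R]_2) := (M i2 i1 + M i2 i2 - M i1 i1 - M i1 i2)/2.
Definition cd (M : 'M[R]_2) := (M i1 i1 - M i1 i2 - M i2 i1 + M i2 i2)/2.

Lemma Leig_iff M l : is_Leig M l <-> Lpred (ca M) (cb M) (cg M) (cd M) l.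
Proof.
rewrite /is_Leig -real_char /ca /cb /cg /cd.
have [s11 s12 s21 s22] := subE M l.
split.
- move=> [x [xn0 hx hy hq]].
  exists (x i1 0), (x i2 0).
  move: hy hq; rewrite /inK qE !mulE s11 s12 s21 s22 => hy hq.
  split => //.
  rewrite lt_neqAle (le_trans (normr_ge0 _) hx) andbT.
  apply/eqP => h0; apply: (negP xn0); apply/eqP/matrixP => i j.
  rewrite (ord1 j) mxE; case: (ord2 i) => ->; last by rewrite -h0.
  by apply/normr0_eq0/eqP; rewrite eq_le normr_ge0 andbT h0.
- move=> [x0 [x1 [hx1 hx hy hq]]].
  exists (\col_i (if i == i1 then x0 else x1)).
  have e1 : (\col_i (if i == i1 then x0 else x1)) i1 0 = x0 by rewrite mxE.
  have e2 : (\col_i (if i == i1 then x0 else x1)) i2 0 = x1 by rewrite mxE.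
  rewrite /inK qE !mulE s11 s12 s21 s22 e1 e2; split => //.
  + apply/eqP => /matrixP /(_ i2 0); rewrite e2 mxE => h; move: hx1; rewrite h ltxx //.
Qed.
Lemma mpos0 {x q : R} : 0 < q -> x * q = 0 -> x = 0.
Proof. by move=> hq /eqP; rewrite mulf_eq0 (gt_eqF hq) orbF => /eqP. Qed.

Lemma Lsig_C l : Lpred 1 0 0 (-1) l <-> (l = 1 \/ l = -1).
Proof.
split.
- case=> [[_ ->]|[[_ ->]|[p [q [hp hq e1 e2]]]]]; [by left|by right|].
  rewrite mul0r addr0 in e1; rewrite mul0r add0r in e2.
  have := mpos0 hp e1; have := mpos0 hq e2; lra.
- case=> ->; [left|right; left]; split => //; lra.
Qed.

Lemma Lsig_mC l : Lpred (-1) 0 0 1 l <-> (l = 1 \/ l = -1).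
Proof.
split.
- case=> [[_ ->]|[[_ ->]|[p [q [hp hq e1 e2]]]]]; [by right|by left|].
  rewrite mul0r addr0 in e1; rewrite mul0r add0r in e2.
  have := mpos0 hp e1; have := mpos0 hq e2; lra.
- case=> ->; [right; left|left]; split => //; lra.
Qed.

Definition Q4 (a b g d : R) := (a = 1 /\ b = 0 /\ g = 0 /\ d = -1) \/ (a = -1 /\ b = 0 /\ g = 0 /\ d = 1).

Lemma core_g0 a b d :
  (forall l, Lpred a b 0 d l <-> (l = 1 \/ l = -1)) ->
  (forall l, Lpred (-a) (-b) (-0) (-d) l <-> (l = 1 \/ l = -1)) ->
  (0 < b -> d = -1) -> (b < 0 -> d = 1) -> Q4 a b 0 d.
Proof.
move=> HP HN R2 R4.
have ha : a = 1 \/ a = -1 by apply/HP; left; split.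
case: (ltgtP b 0) => hb.
- have hd := R4 hb.
  have all : forall l, Lpred a b 0 d l -> l = a.
    move=> l [[_ ->]|[[hb' _]|[p [q [hp hq e1 e2]]]]] //; first lra.
    rewrite mul0r add0r hd in e2; have hl := mpos0 hq e2.
    have : (a - l) * p = - b * q by lra.
    have : 0 < - b * q by apply: mulr_gt0; lra.
    case: ha => ->; nra.
  have h1 := all 1 ((HP 1).2 (or_introl erefl)).
  have h2 := all (-1) ((HP (-1)).2 (or_intror erefl)).
  lra.
- have hd := R2 hb.
  have all : forall l, Lpred (-a) (-b) (-0) (-d) l -> l = -a.
    move=> l [[_ ->]|[[hb' _]|[p [q [hp hq e1 e2]]]]] //; first lra.
    rewrite oppr0 mul0r add0r hd in e2; have hl := mpos0 hq e2.
    have : (-a - l) * p = b * q by lra.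
    have : 0 < b * q by apply: mulr_gt0; lra.
    case: ha => ->; nra.
  have h1 := all 1 ((HN 1).2 (or_introl erefl)).
  have h2 := all (-1) ((HN (-1)).2 (or_intror erefl)).
  lra.
- subst b.
  have hd : d = 1 \/ d = -1 by apply/HP; right; left; split.
  have all : forall l, Lpred a 0 0 d l -> l = a \/ l = d.
    move=> l [[_ ->]|[[_ ->]|[p [q [hp hq e1 e2]]]]]; [by left|by right|].
    rewrite mul0r addr0 in e1; left; have := mpos0 hp e1; lra.
  have h1 := all 1 ((HP 1).2 (or_introl erefl)).
  have h2 := all (-1) ((HP (-1)).2 (or_intror erefl)).
  rewrite /Q4; case: ha => ha; case: hd => hd;
    [exfalso; case: h1; case: h2; lra | by left; rewrite ha hd | by right; rewrite ha hd
    | exfalso; case: h1; case: h2; lra].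
Qed.

Lemma core_M a b g d : 0 < g ->
  (forall l, Lpred a b g d l <-> (l = 1 \/ l = -1)) ->
  (forall l, Lpred (-a) (-b) (-g) (-d) l <-> (l = 1 \/ l = -1)) ->
  (0 < g -> a = -1) -> (0 < b -> d = -1) -> False.
Proof.
move=> hg HP HN R1 R2.
have ha := R1 hg.
case: ((HP 1).2 (or_introl erefl)) => [[_ h]|[[hb h]|[p [q [hp hq e1 e2]]]]].
- lra.
- have hb0 : b = 0.
    case: (ltgtP b 0) => // hb'; [lra| have := R2 hb'; lra].
  case: ((HN 1).2 (or_introl erefl)) => [[h' _]|[[_ h']|[p [q [hp hq e1 e2]]]]].
  + lra.
  + lra.
  + rewrite -h in e2. have : 0 < g * p by apply: mulr_gt0. nra.
- rewrite ha in e1.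
  have hbq : b * q = 2 * p by lra.
  have hb : 0 < b by nra.
  have hd := R2 hb.
  case: ((HN 1).2 (or_introl erefl)) => [[h' _]|[[h' _]|[p' [q' [hp' hq' e1' e2']]]]].
  + lra.
  + lra.
  + rewrite ha in e1'. have : 0 < b * q' by apply: mulr_gt0. nra.
Qed.

Lemma core_S a g d : 0 < g ->
  (forall l, Lpred (-a) (-g) (-g) (-d) l <-> (l = 1 \/ l = -1)) -> False.
Proof.
move=> hg HN.
case: ((HN 1).2 (or_introl erefl)) => [[h' _]|[[h' _]|[p [q [hp hq e1 e2]]]]]; try lra.
case: ((HN (-1)).2 (or_intror erefl)) => [[h' _]|[[h' _]|[p' [q' [hp' hq' e1' e2']]]]]; try lra.
have : p' * ((- a - 1) * p + - g * q) + q' * (- g * p + (- d - 1) * q)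
   - p * ((- a - -1) * p' + - g * q') - q * (- g * p' + (- d - -1) * q') = -2 * (p * p' + q * q') by ring.
rewrite e1 e2 e1' e2' !mulr0 !subr0 addr0.
have : 0 < p * p' by apply: mulr_gt0.
have : 0 < q * q' by apply: mulr_gt0.
lra.
Qed.

Lemma small {g : R} (y u : R) : 0 < g -> exists t, [/\ 0 < t, t * y <= g & t * u < 1].
Proof.
move=> hg.
set K := `|y| + `|u| + 1.
have hK : 0 < K by rewrite /K; have := normr_ge0 y; have := normr_ge0 u; lra.
exists (g / ((1 + g) * K)).
set t := g / ((1 + g) * K).
have ht : 0 < t by rewrite /t divr_gt0 // mulr_gt0 //; lra.
have htK : t * K * (1 + g) = g by rewrite /t; field; apply/andP; split; rewrite gt_eqF //; lra.
have hy : t * y <= t * K.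
  by rewrite ler_pM2l // /K; have := ler_norm y; have := normr_ge0 u; lra.
have hu : t * u <= t * K.
  by rewrite ler_pM2l // /K; have := ler_norm u; have := normr_ge0 y; lra.
have htK0 : 0 < t * K by apply: mulr_gt0.
split => //; nra.
Qed.

Lemma realM2 (a b g d y1 y2 y3 y4 w1 w2 w3 w4 : R) :
  (forall l, Lpred a b g d l <-> (l = 1 \/ l = -1)) ->
  (forall l, Lpred (-a) (-b) (-g) (-d) l <-> (l = 1 \/ l = -1)) ->
  (forall t l, 0 < t -> Lpred (-t * y1 + a) (-t * y2 + b) (-t * y3 + g) (-t * y4 + d) l -> l = -1) ->
  (forall t l, 0 < t -> Lpred (-t * w1 + -a) (-t * w2 + -b) (-t * w3 + -g) (-t * w4 + -d) l -> l = -1) ->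
  Q4 a b g d.
Proof.
move=> HP HN T1 T2.
have R1 : 0 < g -> a = -1.
  move=> hg; have ha : a = 1 \/ a = -1 by apply/HP; left; split => //; lra.
  have [t [ht h1 h2]] := small y3 y1 hg.
  have := T1 t (-t * y1 + a) ht; rewrite /Lpred.
  have : 0 <= -t * y3 + g by lra.
  case: ha => -> // hh H; have := H (or_introl (conj hh erefl)); lra.
have R2 : 0 < b -> d = -1.
  move=> hb; have hd : d = 1 \/ d = -1 by apply/HP; right; left; split => //; lra.
  have [t [ht h1 h2]] := small y2 y4 hb.
  have := T1 t (-t * y4 + d) ht; rewrite /Lpred.
  have : 0 <= -t * y2 + b by lra.
  case: hd => -> // hh H; have := H (or_intror (or_introl (conj hh erefl))); lra.
have R3 : g < 0 -> a = 1.
  move=> hg; have ha : -a = 1 \/ -a = -1 by apply/HN; left; split => //; lra.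
  have hg' : 0 < -g by lra.
  have [t [ht h1 h2]] := small w3 w1 hg'.
  have := T2 t (-t * w1 + -a) ht; rewrite /Lpred.
  have : 0 <= -t * w3 + -g by lra.
  move=> hh H; have := H (or_introl (conj hh erefl)); case: ha; lra.
have R4 : b < 0 -> d = 1.
  move=> hb; have hd : -d = 1 \/ -d = -1 by apply/HN; right; left; split => //; lra.
  have hb' : 0 < -b by lra.
  have [t [ht h1 h2]] := small w2 w4 hb'.
  have := T2 t (-t * w4 + -d) ht; rewrite /Lpred.
  have : 0 <= -t * w2 + -b by lra.
  move=> hh H; have := H (or_intror (or_introl (conj hh erefl))); case: hd; lra.
case: (ltgtP g 0) => hg.
- exfalso; apply: (@core_M (-a) (-b) (-g) (-d)) => //.
  + lra.
  + by move=> l; rewrite !opprK.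
  + move=> _; have := R3 hg; lra.
  + move=> hb; have hb2 : b < 0 by lra.
    have := R4 hb2; lra.
- by exfalso; apply: (@core_M a b g d).
- subst g; apply: core_g0 => //.
Qed.

Lemma realS2 (a b g d : R) :
  (forall l, Lpred a b g d l <-> (l = 1 \/ l = -1)) ->
  (forall l, Lpred (-a) (-b) (-g) (-d) l <-> (l = 1 \/ l = -1)) ->
  b = g -> Q4 a b g d.
Proof.
move=> HP HN hbg; subst b.
case: (ltgtP g 0) => hg.
- exfalso; apply: (@core_S (-a) (-g) (-d)); first lra.
  by move=> l; rewrite !opprK.
- by exfalso; apply: (@core_S a g d).
- subst g; apply: core_g0 => // hb; lra.
Qed.
Definition Cm : 'M[R]_2 := E R i1 i2 + E R i2 i1.
Definition B1 : 'M[R]_2 := \matrix_(i, j) (if i == i1 then -1 else 1).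
Definition B2 : 'M[R]_2 := \matrix_(i, j) (if j == i1 then -1 else 1).

Lemma coordC : [/\ ca Cm = 1, cb Cm = 0, cg Cm = 0 & cd Cm = -1].
Proof. rewrite /ca /cb /cg /cd /Cm /E !mxE /=; split; by field. Qed.
Lemma coordB1 : [/\ ca B1 = 0, cb B1 = 0, cg B1 = 2 & cd B1 = 0].
Proof. rewrite /ca /cb /cg /cd /B1 !mxE /=; split; by field. Qed.
Lemma coordB2 : [/\ ca B2 = 0, cb B2 = 2, cg B2 = 0 & cd B2 = 0].
Proof. rewrite /ca /cb /cg /cd /B2 !mxE /=; split; by field. Qed.
Lemma coordL k (A B : 'M[R]_2) :
  [/\ ca (k *: A + B) = k * ca A + ca B, cb (k *: A + B) = k * cb A + cb B,
      cg (k *: A + B) = k * cg A + cg B & cd (k *: A + B) = k * cd A + cd B].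
Proof. rewrite /ca /cb /cg /cd !mxE; split; by field. Qed.
Lemma coordN (A : 'M[R]_2) :
  [/\ ca (- A) = - ca A, cb (- A) = - cb A, cg (- A) = - cg A & cd (- A) = - cd A].
Proof. rewrite /ca /cb /cg /cd !mxE; split; by field. Qed.
Lemma coord_eq (M N : 'M[R]_2) : ca M = ca N -> cb M = cb N -> cg M = cg N -> cd M = cd N -> M = N.
Proof.
rewrite /ca /cb /cg /cd => h1 h2 h3 h4; apply/matrixP => i j.
case: (ord2 i) => ->; case: (ord2 j) => ->; lra.
Qed.

Lemma Q4_mat (P : 'M[R]_2) : Q4 (ca P) (cb P) (cg P) (cd P) -> P = Cm \/ P = - Cm.
Proof.
have [c1 c2 c3 c4] := coordC; have [n1 n2 n3 n4] := coordN Cm.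
case=> [[h1 [h2 [h3 h4]]]|[h1 [h2 [h3 h4]]]]; [left|right]; apply: coord_eq; lra.
Qed.

Lemma sigC (M : 'M[R]_2) : (forall l, is_Leig M l <-> is_Leig Cm l) ->
  forall l, Lpred (ca M) (cb M) (cg M) (cd M) l <-> (l = 1 \/ l = -1).
Proof.
move=> h l; rewrite -Leig_iff h Leig_iff.
by have [-> -> -> ->] := coordC; apply: Lsig_C.
Qed.
Lemma sigmC (M : 'M[R]_2) : (forall l, is_Leig (- M) l <-> is_Leig (- Cm) l) ->
  forall l, Lpred (- ca M) (- cb M) (- cg M) (- cd M) l <-> (l = 1 \/ l = -1).
Proof.
move=> h l; have [n1 n2 n3 n4] := coordN M; rewrite -n1 -n2 -n3 -n4 -Leig_iff.
rewrite h Leig_iff.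
have [-> -> -> ->] := coordN Cm; have [-> -> -> ->] := coordC.
by rewrite !oppr0 opprK; apply: Lsig_mC.
Qed.
Lemma main :
  (forall phi : 'M[R]_2 -> 'M[R]_2,
     (forall (a : R) (A B : 'M[R]_2), phi (a *: A + B) = a *: phi A + phi B) ->
     (forall A : 'M[R]_2, sigmaK (phi A) = sigmaK A) ->
     phi (E R i1 i2 + E R i2 i1) = E R i1 i2 + E R i2 i1 \/
     phi (E R i1 i2 + E R i2 i1) = - (E R i1 i2 + E R i2 i1))
  /\
  (forall phi : 'M[R]_2 -> 'M[R]_2,
     (forall A : 'M[R]_2, symmetric2 A -> symmetric2 (phi A)) ->
     (forall (a : R) (A B : 'M[R]_2), symmetric2 A -> symmetric2 B ->
        phi (a *: A + B) = a *: phi A + phi B) ->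
     (forall A : 'M[R]_2, symmetric2 A -> sigmaK (phi A) = sigmaK A) ->
     phi (E R i1 i2 + E R i2 i1) = E R i1 i2 + E R i2 i1 \/
     phi (E R i1 i2 + E R i2 i1) = - (E R i1 i2 + E R i2 i1)).
Proof.
have symC : symmetric2 Cm by rewrite /symmetric2 /Cm /E linearD /= !trmx_delta addrC.
have sym0 : symmetric2 (0 : 'M[R]_2) by rewrite /symmetric2 trmx0.
have symN : symmetric2 (- Cm) by rewrite /symmetric2 linearN /= symC.
split.
- move=> phi lin sig.
  have sg A l : is_Leig (phi A) l <-> is_Leig A l.
    by change (sigmaK (phi A) l <-> sigmaK A l); rewrite sig.
  have phi0 : phi 0 = 0.
    have h := lin 1 0 0; rewrite !scale1r addr0 in h.
    by apply: (addrI (phi 0)); rewrite addr0 -h.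
  have phiN A : phi (- A) = - phi A.
    by have := lin (-1) A 0; rewrite !scaleN1r addr0 phi0 addr0.
  apply: Q4_mat.
  set P := phi Cm.
  have HP := @sigC P (fun l => sg Cm l).
  have HN : forall l, is_Leig (- P) l <-> is_Leig (- Cm) l by move=> l; rewrite -phiN.
  have HN' := @sigmC P HN.
  have [n1 n2 n3 n4] := coordN P.
  have [c1 c2 c3 c4] := coordC.
  apply: (realM2 _ _ _ _ (ca (phi B1)) (cb (phi B1)) (cg (phi B1)) (cd (phi B1))
                 (ca (phi B2)) (cb (phi B2)) (cg (phi B2)) (cd (phi B2))) => //.
  + move=> t l ht.
    have [e1 e2 e3 e4] := coordL (-t) (phi B1) P.
    rewrite -e1 -e2 -e3 -e4 -Leig_iff -lin sg Leig_iff.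
    have [f1 f2 f3 f4] := coordL (-t) B1 Cm.
    rewrite f1 f2 f3 f4; have [-> -> -> ->] := coordB1; rewrite c1 c2 c3 c4.
    case=> [[h _]|[[_ ->]|[p [q [hp hq e5 e6]]]]]; [lra | lra |].
    have : 0 < t * p by apply: mulr_gt0.
    nra.
  + move=> t l ht.
    have [e1 e2 e3 e4] := coordL (-t) (phi B2) (- P).
    rewrite n1 n2 n3 n4 in e1 e2 e3 e4.
    rewrite -e1 -e2 -e3 -e4 -Leig_iff -phiN -lin sg Leig_iff.
    have [f1 f2 f3 f4] := coordL (-t) B2 (- Cm).
    have [m1 m2 m3 m4] := coordN Cm.
    rewrite f1 f2 f3 f4 m1 m2 m3 m4; have [-> -> -> ->] := coordB2; rewrite c1 c2 c3 c4.
    case=> [[_ ->]|[[h _]|[p [q [hp hq e5 e6]]]]]; [lra | lra |].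
    have : 0 < t * q by apply: mulr_gt0.
    nra.
- move=> phi psym lin sig.
  have sg A l : symmetric2 A -> (is_Leig (phi A) l <-> is_Leig A l).
    by move=> hA; change (sigmaK (phi A) l <-> sigmaK A l); rewrite sig.
  have phi0 : phi 0 = 0.
    have h := lin 1 0 0 sym0 sym0; rewrite !scale1r addr0 in h.
    by apply: (addrI (phi 0)); rewrite addr0 -h.
  have phiN : phi (- Cm) = - phi Cm.
    by have := lin (-1) Cm 0 symC sym0; rewrite !scaleN1r addr0 phi0 addr0.
  apply: Q4_mat.
  set P := phi Cm.
  have HP := @sigC P (fun l => sg Cm l symC).
  have HN : forall l, is_Leig (- P) l <-> is_Leig (- Cm) l by move=> l; rewrite -phiN; apply: sg.
  have HN' := @sigmC P HN.
  have [n1 n2 n3 n4] := coordN P.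
  apply: realS2 => //.
  have hs := psym _ symC; rewrite -/P /symmetric2 in hs.
  have := congr1 (fun M : 'M[R]_2 => M i2 i1) hs; rewrite mxE /cb /cg => ->; lra.
Qed.
End S.

Theorem lemma4p8 (R : realType) :
  (forall phi : 'M[R]_2 -> 'M[R]_2,
     (forall (a : R) (A B : 'M[R]_2), phi (a *: A + B) = a *: phi A + phi B) ->
     (forall A : 'M[R]_2, sigmaK (phi A) = sigmaK A) ->
     phi (E R i1 i2 + E R i2 i1) = E R i1 i2 + E R i2 i1 \/
     phi (E R i1 i2 + E R i2 i1) = - (E R i1 i2 + E R i2 i1))
  /\
  (forall phi : 'M[R]_2 -> 'M[R]_2,
     (forall A : 'M[R]_2, symmetric2 A -> symmetric2 (phi A)) ->
     (forall (a : R) (A B : 'M[R]_2), symmetric2 A -> symmetric2 B ->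
        phi (a *: A + B) = a *: phi A + phi B) ->
     (forall A : 'M[R]_2, symmetric2 A -> sigmaK (phi A) = sigmaK A) ->
     phi (E R i1 i2 + E R i2 i1) = E R i1 i2 + E R i2 i1 \/
     phi (E R i1 i2 + E R i2 i1) = - (E R i1 i2 + E R i2 i1)).
Proof. exact: main. Qed.
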